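(* Let $k,l,m,n\in\mathbb{N}$ with $n,k\ge 2$ and $m,l\ge 3$. Then among the four ordered graphs $M_n$, $K_m$, $M^{RL}_k$, $M^{+}_l$, none is an induced ordered subgraph of another one of them. Moreover $\chi(M_n)=n+1$, $\chi(K_m)=m$, $\chi(M^{RL}_k)=2k$ and $\chi(M^{+}_l)=2l$.
   Context: An ordered graph is a triple $G=(V,E,\le_G)$ where $(V,E)$ is a finite simple undirected graph and $\le_G$ is a linear order on $V$. $H$ is an induced ordered subgraph of $G$ if there is an injective order-preserving map $V(H)\to V(G)$ such that two vertices are adjacent in $H$ iff their images are adjacent in $G$. $K_m$ is the complete graph on $m$ linearly ordered vertices. The ordered matching $M_n$ has vertices $a_1<b_1<\dots<a_n<b_n$ and edges $\{a_i,b_i\}$. $M^{RL}_n$ is $M_n$ together with all edges $\{b_i,a_j\}$, $i<j$; $M^{LR}_n$ is $M_n$ together with all edges $\{a_i,b_j\}$, $i<j$; $M^{+}_n=M^{LR}_n\cup M^{RL}_n$. The ordered chromatic number $\chi(G)$ is the minimum number of sets in a partition of $V$ into sets consecutive in $\le_G$ spanning no edge. *)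

(* Defs.v *)
From mathcomp Require Import all_boot.
Set Implicit Arguments. Unset Strict Implicit. Unset Printing Implicit Defensive.

(* The field [oedge] lists edges {x,y} as pairs with
   x < y; adjacency [adj] is its symmetric, loop-free closure, so every
   ordered graph is a finite simple undirected graph with a linear order. *)
Record ograph := OGraph { nv : nat; oedge : rel 'I_nv }.

Definition adj (G : ograph) : rel 'I_(nv G) :=
  fun x y => ((x < y) && oedge x y) || ((y < x) && oedge y x).

Definition induced (H G : ograph) : Prop :=
  exists f : 'I_(nv H) -> 'I_(nv G),
    (forall x y : 'I_(nv H), x < y -> f x < f y) /\
    (forall x y : 'I_(nv H), adj (f x) (f y) = adj x y).

(* Vertices of the matchings: 0-based, a_i = 2i, b_i = 2i+1 (i < n),
   so a_0 < b_0 < a_1 < b_1 < ... . *)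
Definition match_edge (n N : nat) (x y : 'I_N) : bool :=
  [exists i : 'I_n, (x == 2 * i :> nat) && (y == (2 * i).+1 :> nat)].
Definition rl_edge (n N : nat) (x y : 'I_N) : bool :=
  [exists i : 'I_n, exists j : 'I_n,
     [&& i < j, x == (2 * i).+1 :> nat & y == 2 * j :> nat]].
Definition lr_edge (n N : nat) (x y : 'I_N) : bool :=
  [exists i : 'I_n, exists j : 'I_n,
     [&& i < j, x == 2 * i :> nat & y == (2 * j).+1 :> nat]].

Definition Mn (n : nat) : ograph :=
  @OGraph (2 * n) (fun x y => match_edge n x y).
Definition Kn (m : nat) : ograph := @OGraph m (fun _ _ => true).
Definition MRL (n : nat) : ograph :=
  @OGraph (2 * n) (fun x y => match_edge n x y || rl_edge n x y).
Definition MLR (n : nat) : ograph :=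
  @OGraph (2 * n) (fun x y => match_edge n x y || lr_edge n x y).
Definition Mplus (n : nat) : ograph :=
  @OGraph (2 * n) (fun x y => [|| match_edge n x y, lr_edge n x y | rl_edge n x y]).

(* A partition of V into (at most) k sets, each consecutive in the order
   and spanning no edge, given as a colouring with k colours whose classes
   are intervals and independent. *)
Definition colorableb (G : ograph) (k : nat) : bool :=
  [exists c : {ffun 'I_(nv G) -> 'I_k},
     [forall x : 'I_(nv G), forall y : 'I_(nv G), forall z : 'I_(nv G),
        [&& x <= y, y <= z & c x == c z] ==> (c y == c x)] &&
     [forall x : 'I_(nv G), forall y : 'I_(nv G), adj x y ==> (c x != c y)]].

Lemma colorable_nv (G : ograph) : colorableb G (nv G).
Proof.
apply/existsP; exists [ffun x => x]; apply/andP; split.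
- apply/forallP=> x; apply/forallP=> y; apply/forallP=> z; rewrite !ffunE.
  apply/implyP=> /and3P[xy yz /eqP xz]; subst z.
  by rewrite -val_eqE /= eqn_leq yz xy.
- apply/forallP=> x; apply/forallP=> y; rewrite !ffunE.
  apply/implyP; rewrite /adj -val_eqE /= neq_ltn.
  by case/orP=> /andP[-> _]; rewrite ?orbT.
Qed.

Definition ochi (G : ograph) : nat := ex_minn (ex_intro (colorableb G) _ (colorable_nv G)).

(* Main.v *)
Require Import Defs.
From mathcomp Require Import all_boot zify.
Set Implicit Arguments. Unset Strict Implicit. Unset Printing Implicit Defensive.

Definition EMn (x y : nat) := ~~ odd x && (y == x.+1).
Definition ERL (x y : nat) := [&& odd x, ~~ odd y & x < y].
Definition ELR (x y : nat) := [&& ~~ odd x, odd y & x.+1 < y].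
Definition AN (E : nat -> nat -> bool) (x y : nat) := ((x < y) && E x y) || ((y < x) && E y x).

Lemma me_E n (x y : 'I_(2*n)) : match_edge n x y = EMn x y.
Proof.
apply/existsP/andP.
- case=> i /andP[/eqP -> /eqP ->]; split; lia.
- case=> h1 /eqP h2. have := ltn_ord y. move=> hy.
  have hi : x./2 < n by lia.
  exists (Ordinal hi); apply/andP; split; apply/eqP => /=; lia.
Qed.

Lemma rl_E n (x y : 'I_(2*n)) : rl_edge n x y = ERL x y.
Proof.
apply/existsP/and3P.
- case=> i /existsP[j /and3P[hij /eqP -> /eqP ->]]; split; lia.
- case=> h1 h2 h3. have := ltn_ord y. have := ltn_ord x. move=> hx hy.
  have hi : x./2 < n by lia.
  have hj : y./2 < n by lia.
  exists (Ordinal hi); apply/existsP; exists (Ordinal hj); apply/and3P; split => /=; try apply/eqP; lia.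
Qed.

Lemma lr_E n (x y : 'I_(2*n)) : lr_edge n x y = ELR x y.
Proof.
apply/existsP/and3P.
- case=> i /existsP[j /and3P[hij /eqP -> /eqP ->]]; split; lia.
- case=> h1 h2 h3. have := ltn_ord y. have := ltn_ord x. move=> hx hy.
  have hi : x./2 < n by lia.
  have hj : y./2 < n by lia.
  exists (Ordinal hi); apply/existsP; exists (Ordinal hj); apply/and3P; split => /=; try apply/eqP; lia.
Qed.

Lemma adjE G (E : nat -> nat -> bool) : (forall x y : 'I_(nv G), oedge x y = E x y) ->
  forall x y : 'I_(nv G), adj x y = AN E x y.
Proof. by move=> H x y; rewrite /adj /AN !H. Qed.

Lemma adjMn n (x y : 'I_(nv (Mn n))) : adj x y = AN EMn x y.
Proof. by apply: adjE => a b; exact: me_E. Qed.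
Lemma adjKn n (x y : 'I_(nv (Kn n))) : adj x y = AN (fun _ _ => true) x y.
Proof. by apply: adjE. Qed.
Lemma adjMRL n (x y : 'I_(nv (MRL n))) : adj x y = AN (fun a b => EMn a b || ERL a b) x y.
Proof. by apply: adjE => a b; rewrite /= me_E rl_E. Qed.
Lemma adjMplus n (x y : 'I_(nv (Mplus n))) : adj x y = AN (fun a b => [|| EMn a b, ELR a b | ERL a b]) x y.
Proof. by apply: adjE => a b; rewrite /= me_E rl_E lr_E. Qed.

Lemma insub_ord N a (ha : a < N) : insub a = Some (Ordinal ha).
Proof. case: insubP => [y _ hy|]; first by congr Some; apply: val_inj. by rewrite ha. Qed.

Lemma induced_nat H G EH EG :
  (forall x y : 'I_(nv H), adj x y = AN EH x y) ->
  (forall x y : 'I_(nv G), adj x y = AN EG x y) ->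
  induced H G -> exists F : nat -> nat,
   (forall a b, a < b -> b < nv H -> F a < F b) /\
   (forall a b, a < nv H -> b < nv H -> AN EG (F a) (F b) = AN EH a b).
Proof.
move=> hH hG [f [mono hadj]].
exists (fun a => oapp (fun x => val (f x)) 0 (insub a)); split.
- move=> a b hab hb. have ha : a < nv H by lia.
  by rewrite (insub_ord ha) (insub_ord hb) /=; apply: mono.
- move=> a b ha hb. rewrite (insub_ord ha) (insub_ord hb) /=.
  by rewrite -hG hadj hH.
Qed.

Lemma AN_lt E x y : x < y -> AN E x y = E x y.
Proof. move=> h; rewrite /AN h /=; have -> : (y < x) = false by lia. by rewrite orbF. Qed.

Lemma induced_nat2 H G EH EG :
  (forall x y : 'I_(nv H), adj x y = AN EH x y) ->
  (forall x y : 'I_(nv G), adj x y = AN EG x y) ->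
  induced H G -> exists F : nat -> nat,
   (forall a b, a < b -> b < nv H -> F a < F b) /\
   (forall a b, a < b -> b < nv H -> EG (F a) (F b) = EH a b).
Proof.
move=> hH hG /(induced_nat hH hG) [F [mono ad]]; exists F; split => // a b ab hb.
by rewrite -AN_lt ?mono // -(AN_lt _ ab) ad //; apply: leq_trans hb; apply: ltnW.
Qed.

Lemma ERLE x y : x < y -> (EMn x y || ERL x y) = (odd x && ~~ odd y) || (~~ odd x && (y == x.+1)).
Proof. move=> h; rewrite /EMn /ERL h; by case: (odd x); case: (odd y); rewrite /= ?orbF ?andbT ?andbF. Qed.
Lemma EPE x y : x < y -> [|| EMn x y, ELR x y | ERL x y] = (odd x != odd y).
Proof. move=> h; rewrite /EMn /ERL /ELR h. case hx: (odd x); case hy: (odd y); rewrite /= ?orbF ?andbT ?andbF ?orbT //; lia. Qed.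
Ltac Mo mono a b := have := mono a b erefl; move=> /(_ ltac:(simpl; lia)); intro.
Ltac Ad ad a b := have := ad a b erefl; move=> /(_ ltac:(simpl; lia)); try (rewrite ERLE; [|lia]); try (rewrite EPE; [|lia]).
Ltac par F i := let h := fresh "p" in case h: (odd (F i)); simpl.
Ltac fin := rewrite /EMn /ERL /ELR /=; lia.
Ltac fin3 F := rewrite /EMn /ERL /ELR /=; par F 0; par F 1; par F 2; lia.
Ltac fin4 F := rewrite /EMn /ERL /ELR /=; par F 0; par F 1; par F 2; par F 3; lia.
Ltac fin5 F := rewrite /EMn /ERL /ELR /=; par F 0; par F 1; par F 2; par F 3; par F 4; lia.

Lemma nMnK n m : 2 <= n -> ~ induced (Mn n) (Kn m).
Proof. move=> hn /(induced_nat2 (@adjMn n) (@adjKn m)) [F [mono ad]]. Ad ad 0 2. fin. Qed.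
Lemma nMRLK n m : 2 <= n -> ~ induced (MRL n) (Kn m).
Proof. move=> hn /(induced_nat2 (@adjMRL n) (@adjKn m)) [F [mono ad]]. Ad ad 0 2. fin. Qed.
Lemma nMPK n m : 2 <= n -> ~ induced (Mplus n) (Kn m).
Proof. move=> hn /(induced_nat2 (@adjMplus n) (@adjKn m)) [F [mono ad]]. Ad ad 0 2. fin. Qed.

Lemma nKMn n m : 3 <= m -> ~ induced (Kn m) (Mn n).
Proof. move=> hn /(induced_nat2 (@adjKn m) (@adjMn n)) [F [mono ad]].
Mo mono 0 1. Mo mono 1 2. Ad ad 0 1. Ad ad 1 2. Ad ad 0 2. fin3 F. Qed.
Lemma nKMRL n m : 3 <= m -> ~ induced (Kn m) (MRL n).
Proof. move=> hn /(induced_nat2 (@adjKn m) (@adjMRL n)) [F [mono ad]].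
Mo mono 0 1. Mo mono 1 2. Ad ad 0 1. Ad ad 1 2. Ad ad 0 2. fin3 F. Qed.
Lemma nKMP n m : 3 <= m -> ~ induced (Kn m) (Mplus n).
Proof. move=> hn /(induced_nat2 (@adjKn m) (@adjMplus n)) [F [mono ad]].
Mo mono 0 1. Mo mono 1 2. Ad ad 0 1. Ad ad 1 2. Ad ad 0 2. fin3 F. Qed.

Lemma nMRLMn n m : 2 <= m -> ~ induced (MRL m) (Mn n).
Proof. move=> hn /(induced_nat2 (@adjMRL m) (@adjMn n)) [F [mono ad]].
Mo mono 0 1. Mo mono 1 2. Ad ad 0 1. Ad ad 1 2. fin3 F. Qed.
Lemma nMPMn n m : 2 <= m -> ~ induced (Mplus m) (Mn n).
Proof. move=> hn /(induced_nat2 (@adjMplus m) (@adjMn n)) [F [mono ad]].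
Mo mono 0 1. Mo mono 1 2. Ad ad 0 1. Ad ad 1 2. fin3 F. Qed.

Lemma nMnMRL n m : 2 <= n -> ~ induced (Mn n) (MRL m).
Proof. move=> hn /(induced_nat2 (@adjMn n) (@adjMRL m)) [F [mono ad]].
Mo mono 0 1. Mo mono 1 2. Mo mono 2 3. Ad ad 0 1. Ad ad 2 3. Ad ad 0 2. Ad ad 0 3. Ad ad 1 2. Ad ad 1 3. fin4 F. Qed.
Lemma nMnMP n m : 2 <= n -> ~ induced (Mn n) (Mplus m).
Proof. move=> hn /(induced_nat2 (@adjMn n) (@adjMplus m)) [F [mono ad]].
Mo mono 0 1. Mo mono 1 2. Mo mono 2 3. Ad ad 0 1. Ad ad 2 3. Ad ad 0 2. Ad ad 0 3. fin4 F. Qed.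
Lemma nMRLMP n m : 2 <= n -> ~ induced (MRL n) (Mplus m).
Proof. move=> hn /(induced_nat2 (@adjMRL n) (@adjMplus m)) [F [mono ad]].
Mo mono 0 1. Mo mono 1 2. Mo mono 2 3. Ad ad 0 1. Ad ad 1 2. Ad ad 2 3. Ad ad 0 3. fin4 F. Qed.
Lemma nMPMRL n m : 3 <= n -> ~ induced (Mplus n) (MRL m).
Proof. move=> hn /(induced_nat2 (@adjMplus n) (@adjMRL m)) [F [mono ad]].
Mo mono 0 1. Mo mono 1 2. Mo mono 2 3. Mo mono 3 4. Ad ad 0 3. Ad ad 1 4. Ad ad 0 1. fin5 F. Qed.
Lemma col_facts G k : colorableb G k -> exists c : 'I_(nv G) -> 'I_k,
  (forall x y z : 'I_(nv G), x <= y -> y <= z -> c x = c z -> c y = c x) /\ (forall x y : 'I_(nv G), adj x y -> c x != c y).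
Proof.
move=> /existsP [c /andP [/forallP hint /forallP hind]]; exists c; split.
- move=> x y z xy yz e. have := hint x; move/forallP/(_ y)/forallP/(_ z)/implyP.
  by rewrite xy yz e eqxx => /(_ isT) /eqP.
- move=> x y a. have := hind x; move/forallP/(_ y)/implyP. exact.
Qed.

Lemma lb G k p (g : 'I_p -> 'I_(nv G)) :
  (forall i j : 'I_p, i < j -> exists x y : 'I_(nv G), [/\ g i <= x, x < y, y <= g j & adj x y]) ->
  colorableb G k -> p <= k.
Proof.
move=> hg /col_facts [c [hint hind]].
have key : forall i j : 'I_p, i < j -> c (g i) != c (g j).
  move=> i j ij; apply/eqP => e. have [x [y [h1 h2 h3 h4]]] := hg i j ij.
  have ex := hint _ _ _ h1 (leq_trans (ltnW h2) h3) e.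
  have ey := hint _ _ _ (leq_trans h1 (ltnW h2)) h3 e.
  by move/negP: (hind _ _ h4); rewrite ex ey eqxx.
have inj : injective (fun i => c (g i)).
  move=> i j /= e. case: (ltngtP i j) => h.
  - by move/negP: (key _ _ h); rewrite e eqxx.
  - by move/negP: (key _ _ h); rewrite e eqxx.
  - exact: val_inj.
by have := leq_card _ inj; rewrite !card_ord.
Qed.

Lemma ochi_eq G t : colorableb G t -> (forall k, colorableb G k -> t <= k) -> ochi G = t.
Proof.
move=> ht hl; rewrite /ochi; case: ex_minnP => c hc hmin.
by apply/eqP; rewrite eqn_leq hmin // hl.
Qed.

Lemma lb_consec G k : (forall x y : 'I_(nv G), y = x.+1 :> nat -> adj x y) -> colorableb G k -> nv G <= k.
Proof.
move=> h; apply: (@lb G k (nv G) id) => i j ij.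
have hi : i.+1 < nv G by apply: leq_trans (ltn_ord j).
exists i, (Ordinal hi); split => //=. exact: h.
Qed.

Lemma chiK m : ochi (Kn m) = m.
Proof.
apply: ochi_eq; first exact: (colorable_nv (Kn m)).
move=> k; apply: lb_consec => x y e. by rewrite adjKn /AN /= e ltnSn.
Qed.

Lemma chiMRL m : ochi (MRL m) = 2 * m.
Proof.
apply: ochi_eq; first exact: (colorable_nv (MRL m)).
move=> k; apply: lb_consec => x y e. rewrite adjMRL AN_lt ?e // ERLE ?e //.
case h: (odd x); rewrite /= ?eqxx ?orbT //; lia.
Qed.

Lemma chiMP m : ochi (Mplus m) = 2 * m.
Proof.
apply: ochi_eq; first exact: (colorable_nv (Mplus m)).
move=> k; apply: lb_consec => x y e. rewrite adjMplus AN_lt ?e // EPE ?e //. lia.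
Qed.

Lemma chiMn n : 0 < n -> ochi (Mn n) = n.+1.
Proof.
move=> hn0; apply: ochi_eq.
- apply/existsP; exists [ffun x : 'I_(nv (Mn n)) => (inord (x.+1./2) : 'I_n.+1)].
  have hb : forall x : 'I_(nv (Mn n)), x.+1./2 <= n.
    move=> x; have := ltn_ord x; rewrite /=; lia.
  apply/andP; split.
  + apply/forallP=> x; apply/forallP=> y; apply/forallP=> z; rewrite !ffunE.
    apply/implyP=> /and3P[xy yz /eqP e].
    have := congr1 val e; rewrite /= !inordK ?ltnS ?hb // => e'.
    apply/eqP; apply: val_inj; rewrite /= !inordK ?ltnS ?hb //. move: xy yz e'; have : forall a b c : nat, a <= b -> b <= c -> uphalf a = uphalf c -> uphalf b = uphalf a by lia. by apply.
  + apply/forallP=> x; apply/forallP=> y; rewrite !ffunE; apply/implyP.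
    rewrite adjMn /AN /EMn -val_eqE /= !inordK ?ltnS ?hb //. lia.
- move=> k.
  have hlt : forall i : 'I_n.+1, (2*i).-1 < nv (Mn n).
    move=> i; have := ltn_ord i; rewrite /=; lia.
  apply: (@lb (Mn n) k n.+1 (fun i => Ordinal (hlt i))).
  move=> i j ij.
  have hj := ltn_ord j. 
  have h1 : (2 * j).-2 < nv (Mn n) by rewrite /=; lia.
  have h2 : (2 * j).-1 < nv (Mn n) by rewrite /=; lia.
  exists (Ordinal h1), (Ordinal h2).
  split; rewrite /=; try lia. rewrite adjMn /AN /EMn /=. lia.
Qed.

Theorem proposition2 (k l m n : nat) :
  2 <= n -> 2 <= k -> 3 <= m -> 3 <= l ->
  (forall i j : 'I_4, i != j ->
     ~ induced (nth (Kn 0) [:: Mn n; Kn m; MRL k; Mplus l] i)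
               (nth (Kn 0) [:: Mn n; Kn m; MRL k; Mplus l] j)) /\
  ochi (Mn n) = n.+1 /\ ochi (Kn m) = m /\
  ochi (MRL k) = 2 * k /\ ochi (Mplus l) = 2 * l.
Proof.
move=> hn hk hm hl; split; last first.
  rewrite chiMn ?chiK ?chiMRL ?chiMP //; lia.
move=> i j; rewrite -val_eqE.
case: i => [[|[|[|[|i]]]] hi] //; case: j => [[|[|[|[|j]]]] hj] //= _.
all: first [apply: nMnK; lia|apply: nMnMRL; lia|apply: nMnMP; lia|apply: nKMn; lia|apply: nKMRL; lia|apply: nKMP; lia|apply: nMRLMn; lia|apply: nMRLK; lia|apply: nMRLMP; lia|apply: nMPMn; lia|apply: nMPK; lia|apply: nMPMRL; lia].
Qed.
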